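(* For every positive integer $s$ there exist infinitely many (pairwise non-isomorphic) connected, essentially 2-edge connected graphs $G$ such that the graph obtained from $G$ by deleting all of its leaves is 2-connected, and $G^2$ has no $[2,2s]$-factor.
   Context: All graphs are finite, simple and undirected. The square $G^2$ of a graph $G$ is the graph on $V(G)$ in which two distinct vertices are adjacent iff their distance in $G$ is at most 2. A factor of $G$ is a spanning subgraph. A connected even factor is a connected factor in which every vertex has positive even degree. For a positive integer $s$, a $[2,2s]$-factor of $G$ is a connected even factor of $G$ in which every vertex has degree at most $2s$. A graph is essentially 2-edge connected if deleting fewer than 2 edges cannot result in (a graph with) two nontrivial components, i.e. components with at least one edge. A leaf is a vertex of degree 1. *)

(* Defs.v *)
From mathcomp Require Import all_boot.
Set Implicit Arguments. Unset Strict Implicit. Unset Printing Implicit Defensive.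

Section Graphs.
Variable T : finType.

Definition simple_graph (e : rel T) : Prop := symmetric e /\ irreflexive e.

Definition deg (e : rel T) (x : T) : nat := #|[set y | e x y]|.

Definition leaf (e : rel T) (x : T) : bool := deg e x == 1.

Definition induced (A : pred T) (e : rel T) : rel T :=
  fun x y => [&& e x y, x \in A & y \in A].

Definition connected_on (A : pred T) (e : rel T) : Prop :=
  forall x y, x \in A -> y \in A -> connect (induced A e) x y.

Definition connected (e : rel T) : Prop := 0 < #|T| /\ forall x y : T, connect e x y.

Definition two_connected_on (A : pred T) (e : rel T) : Prop :=
  2 < #|A| /\ connected_on A e /\
  forall v, v \in A -> connected_on [pred x | (x \in A) && (x != v)] e.

Definition two_nontrivial_components (e : rel T) : Prop :=
  exists x y, [/\ 0 < deg e x, 0 < deg e y & ~~ connect e x y].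

Definition del_edge (e : rel T) (u v : T) : rel T :=
  fun x y => e x y && ~~ (((x == u) && (y == v)) || ((x == v) && (y == u))).

Definition ess_2_edge_connected (e : rel T) : Prop :=
  ~ two_nontrivial_components e /\
  forall u v, e u v -> ~ two_nontrivial_components (del_edge e u v).

Definition gsquare (e : rel T) : rel T :=
  fun x y => (x != y) && (e x y || [exists z, e x z && e z y]).

Definition factor (H F : rel T) : Prop :=
  simple_graph F /\ subrel F H.

Definition two_2s_factor (s : nat) (H F : rel T) : Prop :=
  factor H F /\ connected F /\
  forall x, [&& 0 < deg F x, ~~ odd (deg F x) & deg F x <= 2 * s].

End Graphs.

(* Main.v *)
Require Import Defs.
From mathcomp Require Import all_boot zify.
Set Implicit Arguments. Unset Strict Implicit. Unset Printing Implicit Defensive.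

Definition V (m : nat) : finType := (bool + ('I_m * bool))%type.

Definition adj (m : nat) : rel (V m) := fun x y =>
  match x, y with
  | inl _, inr (_, false) => true
  | inr (_, false), inl _ => true
  | inr (i, false), inr (j, true) => i == j
  | inr (i, true), inr (j, false) => i == j
  | _, _ => false
  end.

Lemma adj_sym m : symmetric (adj (m:=m)).
Proof.
by move=> [x|[i []]] [y|[j []]] //=; rewrite eq_sym.
Qed.

Lemma adj_irr m : irreflexive (adj (m:=m)).
Proof. by move=> [x|[i []]]. Qed.

Lemma cardV m : #|V m| = 2 + 2 * m.
Proof. by rewrite card_sum card_prod card_ord card_bool mulnC. Qed.

Lemma deg2 (T : finType) (e : rel T) x x1 x2 :
  x1 != x2 -> e x x1 -> e x x2 -> 1 < deg e x.
Proof.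
move=> ne h1 h2; rewrite /deg.
have <- : #|[set x1; x2]| = 2 by rewrite cards2 ne.
by apply: subset_leq_card; apply/subsetP=> y; rewrite !inE => /orP[]/eqP->.
Qed.

Lemma leafE k (x : V k.+2) : leaf (adj (m:=k.+2)) x = (if x is inr (_, true) then true else false).
Proof.
rewrite /leaf; case: x => [t|[i []]].
apply/negbTE; rewrite neq_ltn; apply/orP; right.
  apply: (@deg2 _ _ _ (inr (ord0, false)) (inr (ord_max, false))) => //.
have E : [set y | adj (inr (i, true)) y] = [set (inr (i, false) : V k.+2)].
    apply/setP=> y; rewrite !inE; case: y => [t|[j []]] //=.
    by apply/esym/negbTE/eqP => -[].
    by apply/idP/eqP => [/eqP->|[->]].
  by rewrite /deg E cards1.
apply/negbTE; rewrite neq_ltn; apply/orP; right.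
  by apply: (@deg2 _ _ _ (inl true) (inl false)).
Qed.

Lemma induced_sym (T : finType) (A : pred T) e : symmetric e -> symmetric (induced A e).
Proof. by move=> se x y; rewrite /induced se; case: (x \in A); case: (y \in A); rewrite ?andbT ?andbF. Qed.

Lemma star (T : finType) (e : rel T) (A : pred T) c : symmetric e ->
  (forall x, x \in A -> connect (induced A e) x c) -> connected_on A e.
Proof.
move=> se h x y hx hy; apply: connect_trans (h _ hx) _.
by rewrite (sym_connect_sym (induced_sym A se)); apply: h.
Qed.

Lemma hub k (A : pred (V k.+2)) t j : inl t \in A -> inr (j, false) \in A ->
  (forall i, inr (i, true) \notin A) ->
  forall x, x \in A -> connect (induced A (adj (m:=k.+2))) x (inl t).
Proof.
move=> ht hj hl [t'|[i []]] hx.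
  case: (eqVneq t' t) => [->|ne]; first exact: connect0.
  apply: (@connect_trans _ _ (inr (j, false))); apply: connect1;
    by rewrite /induced /= ?hx ?hj ?ht.
  by rewrite (negbTE (hl i)) in hx.
by apply: connect1; rewrite /induced /= ?hx ?ht.
Qed.

Lemma card3 (T : finType) (A : pred T) x1 x2 x3 : x1 != x2 -> x1 != x3 -> x2 != x3 ->
  x1 \in A -> x2 \in A -> x3 \in A -> 2 < #|A|.
Proof.
move=> n12 n13 n23 h1 h2 h3.
have <- : #|[set x1; x2; x3]| = 3.
  rewrite -setUA cardsU1 cards2 n23 !inE negb_or n12 n13 //.
apply: subset_leq_card; apply/subsetP=> y; rewrite !inE => /orP[/orP[]|]/eqP->//.
Qed.

Lemma two_conn k : two_connected_on [pred x | ~~ leaf (adj (m:=k.+2)) x] (adj (m:=k.+2)).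
Proof.
have sy := @adj_sym k.+2.
split.
  apply: (@card3 _ _ (inl true) (inl false) (inr (ord0, false))) => //;
    by rewrite inE leafE.
split.
  apply: (@star _ _ _ (inl true)) => //; apply: (@hub _ _ _ ord0);
    by try (move=> i); rewrite inE leafE.
move=> [t|[i []]]; rewrite inE leafE //= => _.
  apply: (@star _ _ _ (inl (~~ t))) => //; apply: (@hub _ _ _ ord0);
    try (move=> i2); rewrite !inE leafE //=; by case: t.
case: (eqVneq i ord0) => [->|ne].
  apply: (@star _ _ _ (inl true)) => //; apply: (@hub _ _ _ ord_max);
    try (move=> i2); rewrite !inE leafE //=.
apply: (@star _ _ _ (inl true)) => //; apply: (@hub _ _ _ ord0);
  try (move=> j2); rewrite !inE leafE //=.
by apply/eqP => -[ei]; rewrite ei eqxx in ne.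
Qed.

Lemma inrE m (i j : 'I_m) b c : (inr (i, b) == inr (j, c) :> V m) = (i == j) && (b == c).
Proof. by apply/eqP/andP => [[-> ->]|[/eqP-> /eqP->]]. Qed.
Lemma inlE m t u : (inl t == inl u :> V m) = (t == u).
Proof. by apply/eqP/eqP => [[]|->]. Qed.
Lemma inlrE m t p : (inl t == inr p :> V m) = false.
Proof. by []. Qed.
Lemma inrlE m t p : (inr p == inl t :> V m) = false.
Proof. by []. Qed.

Lemma conn_adj k x y : connect (adj (m:=k.+2)) x y.
Proof.
have sy := @adj_sym k.+2.
suff h : forall x, connect (adj (m:=k.+2)) x (inl true).
  by apply: connect_trans (h x) _; rewrite sym_connect_sym //; apply: h.
move=> [t|[i []]].
- case: t; first exact: connect0.
  by apply: (@connect_trans _ _ (inr (ord0, false))); apply: connect1.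
- by apply: (@connect_trans _ _ (inr (i, false))); apply: connect1 => //=.
by apply: connect1.
Qed.

Lemma del_sym (T : finType) (e : rel T) u v : symmetric e -> symmetric (del_edge e u v).
Proof.
move=> se x y; rewrite /del_edge se; congr (_ && ~~ _).
by rewrite orbC andbC [X in _ || X]andbC.
Qed.

Lemma pos_deg (T : finType) (e : rel T) x : 0 < deg e x -> exists y, e x y.
Proof.
rewrite /deg card_gt0 => /set0Pn[y]; rewrite inE; by exists y.
Qed.

Lemma hubD k (u v : V k.+2) t j :
  (forall i, del_edge (adj (m:=k.+2)) u v (inr (i, false)) (inl t)) ->
  del_edge (adj (m:=k.+2)) u v (inl (~~ t)) (inr (j, false)) ->
  forall x y, del_edge (adj (m:=k.+2)) u v x y -> connect (del_edge (adj (m:=k.+2)) u v) x (inl t).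
Proof.
set e' := del_edge _ u v.
move=> H1 H2 x y.
have sub : forall a b, e' a b -> adj a b by move=> a b /andP[].
move=> exy.
case: x exy => [t'|[i []]] exy.
- case: (eqVneq t' t) => [->|ne]; first exact: connect0.
  have -> : t' = ~~ t by destruct t, t'; rewrite ?eqxx in ne.
  by apply: (@connect_trans _ _ (inr (j, false))); apply: connect1.
- have := sub _ _ exy; case: y exy => [//|[i' []]] //= exy /eqP ei; subst i'.
  by apply: (@connect_trans _ _ (inr (i, false))); apply: connect1.
by apply: connect1.
Qed.

Lemma other k (i : 'I_k.+2) : exists j, j != i.
Proof.
case: (eqVneq i ord0) => [->|ne]; first by exists ord_max; apply/eqP => /(congr1 val).
by exists ord0; rewrite eq_sym.
Qed.

Ltac dsimp := rewrite /del_edge /= ?inrE ?inlE ?inlrE ?inrlE ?eqxx /=.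

Lemma ess2 k : ess_2_edge_connected (adj (m:=k.+2)).
Proof.
split.
  by move=> [x [y [_ _ /negP]]]; apply; exact: conn_adj.
move=> u v euv [x [y [dx dy /negP nc]]]; apply: nc.
suff [t [j [H1 H2]]] : exists t j,
    (forall i, del_edge (adj (m:=k.+2)) u v (inr (i, false)) (inl t)) /\
    del_edge (adj (m:=k.+2)) u v (inl (~~ t)) (inr (j, false)).
  have [x' ex] := pos_deg dx; have [y' ey] := pos_deg dy.
  apply: connect_trans (hubD H1 H2 ex) _.
  rewrite sym_connect_sym. exact (hubD H1 H2 ey).
  exact: del_sym (@adj_sym k.+2).
clear dx dy; move: euv; case: u => [t0|[i []]]; case: v => [t1|[i' []]] //= euv.
have [j hj] := other i'.
  by exists (~~ t0), j; split => [i2|]; dsimp; case: t0; rewrite /= ?andbT ?andbF ?orbF ?orbT.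
  by exists true, ord0; split => [i2|]; dsimp; rewrite ?andbF.
have [j hj] := other i.
  by exists (~~ t1), j; split => [i2|]; dsimp; case: t1; rewrite /= ?andbT ?andbF ?orbF ?orbT.
by exists true, ord0; split => [i2|]; dsimp; rewrite ?andbF.
Qed.

Lemma sq_l m (i : 'I_m) y : gsquare (adj (m:=m)) (inr (i, true)) y ->
  [|| y == inl true, y == inl false | y == inr (i, false)].
Proof.
rewrite /gsquare => /andP[ne /orP[h|/existsP[z /andP[h1 h2]]]].
  case: y ne h => [t|[j []]] //= _ /eqP ->; by rewrite ?eqxx ?orbT.
case: z h1 h2 => [t|[j []]] //= /eqP <-.
case: y ne => [[]|[j' []]] //=; rewrite ?eqxx ?orbT // => ne /eqP ej.
by rewrite ej eqxx in ne.
Qed.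

Lemma hub_or m (F : rel (V m)) i :
  subrel F (gsquare (adj (m:=m))) -> 1 < deg F (inr (i, true)) ->
  F (inr (i, true)) (inl true) || F (inr (i, true)) (inl false).
Proof.
move=> sub d; apply/negPn/negP; rewrite negb_or => /andP[na nb].
have : deg F (inr (i, true)) <= #|[set (inr (i, false) : V m)]|.
  apply: subset_leq_card; apply/subsetP => y; rewrite !inE => Fy.
  have := sq_l (sub _ _ Fy); case/or3P => /eqP ey; subst y.
  - by rewrite Fy in na.
  - by rewrite Fy in nb.
  - by [].
by rewrite cards1 leqNgt d.
Qed.

Lemma count_l m (F : rel (V m)) t :
  #|[set i | F (inl t) (inr (i, true))]| <= deg F (inl t).
Proof.
rewrite -(card_imset _ (f := fun i : 'I_m => (inr (i, true) : V m))); last first.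
  by move=> a b [].
apply: subset_leq_card; apply/subsetP => y /imsetP[i]; rewrite inE => h ->.
by rewrite inE.
Qed.

Lemma no_factor k s : 4 * s < k.+2 ->
  ~ (exists F : rel (V k.+2), two_2s_factor s (gsquare (adj (m:=k.+2))) F).
Proof.
move=> big [F [[[sF _] sub] [_ dF]]].
have d2 : forall x, 1 < deg F x.
  by move=> x; case/and3P: (dF x); case: (deg F x) => [|[|]].
have dle : forall x, deg F x <= 2 * s by move=> x; case/and3P: (dF x).
set Sa := [set i | F (inl true) (inr (i, true))].
set Sb := [set i | F (inl false) (inr (i, true))].
have : #|[set: 'I_k.+2]| <= #|Sa| + #|Sb|.
  apply: leq_trans (leq_card_setU Sa Sb).
  apply: subset_leq_card; apply/subsetP => i _.
  have := hub_or sub (d2 (inr (i, true))).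
  by rewrite !inE !(sF (inr (i, true))).
rewrite cardsT card_ord => h.
have := leq_trans h (leq_add (leq_trans (count_l F true) (dle _))
                             (leq_trans (count_l F false) (dle _))).
by rewrite -mulnDl leqNgt (leq_trans _ big).
Qed.

Unset Implicit Arguments.
Theorem theorem4 (s : nat) (hs : 0 < s) (n : nat) :
  exists (T : finType) (e : rel T),
    simple_graph e /\ n <= #|T| /\ connected e /\ ess_2_edge_connected e /\
    two_connected_on [pred x | ~~ leaf e x] e /\
    ~ (exists F : rel T, two_2s_factor s (gsquare e) F).
Proof.
pose k := n + 4 * s.
exists (V k.+2), (adj (m:=k.+2)).
split; first by split; [exact: adj_sym | exact: adj_irr].
split; first by rewrite cardV /k; lia.
split; first by split; [rewrite cardV | exact: conn_adj].
split; first exact: ess2.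
split; first exact: two_conn.
apply: no_factor; rewrite /k; lia.
Qed.
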